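(* For integers $1<k<n$, $f_n(\{k,k+1,\dots,n-1\})=2^{n-1}$.
   Context: For $m\ge1$ and a set $B$ of positive integers, $f_m(B)$ denotes the number of linear orders $q$ on $[m]$ such that for every triple $i<j<k$ in $[m]$: if $j\in B$ then $i$ is not ranked last among $\{i,j,k\}$ in $q$, and if $j\notin B$ then $k$ is not ranked first among $\{i,j,k\}$ in $q$. *)

(* Defs.v *)
From mathcomp Require Import all_boot all_order all_fingroup.
Set Implicit Arguments. Unset Strict Implicit. Unset Printing Implicit Defensive.

(* A linear order q on [m] = {1,...,m} is encoded by a permutation
   q : {perm 'I_m}; the element x+1 of [m] (ordinal x) has rank q x,
   with smaller rank = earlier. *)

Definition ranked_last m (q : {perm 'I_m}) (x y z : 'I_m) : bool :=
  (q y < q x) && (q z < q x).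
Definition ranked_first m (q : {perm 'I_m}) (x y z : 'I_m) : bool :=
  (q x < q y) && (q x < q z).

(* B : a set of positive integers, as a predicate on nat.
   Ordinal i : 'I_m stands for the integer i+1 of [m]. *)
Definition good m (B : pred nat) (q : {perm 'I_m}) : bool :=
  [forall i : 'I_m, forall j : 'I_m, forall k : 'I_m,
    ((i < j) && (j < k)) ==>
    (if B (j.+1) then ~~ ranked_last q i j k
     else ~~ ranked_first q k i j)].

Definition f (m : nat) (B : pred nat) : nat := #|[pred q : {perm 'I_m} | good B q]|.

(* Main.v *)
Require Import Defs.
From mathcomp Require Import all_boot all_order all_fingroup.
From mathcomp Require Import zify.
Set Implicit Arguments. Unset Strict Implicit. Unset Printing Implicit Defensive.

Lemma card_lift_perm n (i j : 'I_n.+1) (Q : pred {perm 'I_n.+1}) :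
  #|[pred q : {perm 'I_n.+1} | (q i == j) && Q q]| =
  #|[pred s : {perm 'I_n} | Q (lift_perm i j s)]|.
Proof.
have inj: injective (@lift_perm n i j).
  move=> s t /permP E; apply/permP => x; apply: (@lift_inj _ j).
  by have := E (lift i x); rewrite !lift_perm_lift.
rewrite -(card_image inj); apply: eq_card => q; rewrite !inE.
apply/andP/imageP.
  case=> /eqP qi Qq.
  pose ulsf x := odflt x (unlift (q i) (q (lift i x))).
  have ulsfK x : lift (q i) (ulsf x) = q (lift i x).
    rewrite /ulsf; have:= neq_lift i x.
    by rewrite -(can_eq (permK q)) => /unlift_some[] ? ? ->.
  have inj_ulsf: injective ulsf.
    by move=> x y E; apply: (@lift_inj _ i); apply: (@perm_inj _ q); rewrite -!ulsfK E.
  have E: q = lift_perm i j (perm inj_ulsf).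
    apply/permP => x; case: (unliftP i x) => [x'|] ->.
      by rewrite lift_perm_lift permE -qi ulsfK.
    by rewrite lift_perm_id.
  by exists (perm inj_ulsf); rewrite // inE -E.
by case=> s Qs ->; rewrite lift_perm_id eqxx; split => //; move: Qs; rewrite inE.
Qed.

Definition cond m (Bp : pred nat) (q : {perm 'I_m}) (a b c : 'I_m) : bool :=
  if Bp b.+1 then ~~ ranked_last q a b c else ~~ ranked_first q c a b.

Lemma goodP m Bp (q : {perm 'I_m}) :
  reflect (forall a b c : 'I_m, a < b -> b < c -> cond Bp q a b c) (good Bp q).
Proof.
apply: (iffP forallP) => H.
  move=> a b c ab bc; have /forallP/(_ b)/forallP/(_ c)/implyP := H a.
  by apply; rewrite ab bc.
move=> a; apply/forallP => b; apply/forallP => c; apply/implyP => /andP[ab bc].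
exact: H.
Qed.

Lemma liftlt m (j : 'I_m.+1) (a b : 'I_m) : (lift j a < lift j b) = (a < b).
Proof. by rewrite /= /bump; do 2 case: leqP => ? /=; lia. Qed.

Lemma lift_val_le m (j : 'I_m.+1) (a : 'I_m) : lift j a <= a.+1.
Proof. by rewrite /= /bump; case: leqP => ? /=; lia. Qed.

Lemma L1 n Bp (i j : 'I_n.+2) (s : {perm 'I_n.+1}) :
  (forall y : 'I_n.+1, y < n -> Bp (lift i y).+1 = Bp y.+1) ->
  good Bp (lift_perm i j s) -> good Bp s.
Proof.
move=> HB /goodP H; apply/goodP => a b c ab bc.
have := H (lift i a) (lift i b) (lift i c); rewrite !liftlt => /(_ ab bc).
rewrite /cond /ranked_last /ranked_first !lift_perm_lift !liftlt HB //.
by have := ltn_ord c; lia.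
Qed.

Lemma L2 n Bp (i j : 'I_n.+2) (s : {perm 'I_n.+1}) :
  (forall y : 'I_n.+1, y < n -> Bp (lift i y).+1 = Bp y.+1) ->
  good Bp s ->
  (forall a b c : 'I_n.+2, a < b -> b < c -> (a == i) || (b == i) || (c == i) ->
     cond Bp (lift_perm i j s) a b c) ->
  good Bp (lift_perm i j s).
Proof.
move=> HB /goodP Hs Hi; apply/goodP => a b c ab bc.
case: (unliftP i a) => [a'|] Ea; last by apply: Hi; rewrite // Ea eqxx.
case: (unliftP i b) => [b'|] Eb; last by apply: Hi; rewrite // Eb eqxx orbT.
case: (unliftP i c) => [c'|] Ec; last by apply: Hi; rewrite // Ec eqxx orbT.
subst; rewrite !liftlt in ab bc.
rewrite /cond /ranked_last /ranked_first !lift_perm_lift !liftlt HB; last first.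
  by have := ltn_ord c'; rewrite /=; lia.
exact: Hs.
Qed.

Lemma permv_lt n (q : {perm 'I_n.+2}) (i x : 'I_n.+2) :
  q i = ord_max -> x != i -> q x < n.+1.
Proof.
move=> qi xi; have := ltn_ord (q x).
have : q x != q i by rewrite (inj_eq perm_inj).
rewrite qi => ne; have : (q x : nat) != n.+1.
  by apply: contra ne => /eqP e; apply/eqP/val_inj.
move=> /= h1 h2; lia.
Qed.

Lemma A_nec n k (q : {perm 'I_n.+2}) (i : 'I_n.+2) :
  k <= n.+1 -> q i = ord_max -> good (fun x => k <= x) q -> n <= i.
Proof.
move=> hk qi /goodP H; rewrite leqNgt; apply/negP => lt.
have h1 : i < (inord n : 'I_n.+2) by rewrite inordK.
have h2 : (inord n : 'I_n.+2) < (ord_max : 'I_n.+2) by rewrite inordK.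
have := H _ _ _ h1 h2; rewrite /cond inordK // hk /ranked_last qi /=.
rewrite (permv_lt qi); last by apply/eqP => e; move: h1; rewrite e ltnn.
rewrite (permv_lt qi) //; apply/eqP => e; move: lt; rewrite -e /=; lia.
Qed.

Lemma A_good n k (i : 'I_n.+2) (s : {perm 'I_n.+1}) :
  k <= n.+1 -> n <= i ->
  good (fun x => k <= x) (lift_perm i ord_max s) = good (fun x => k <= x) s.
Proof.
move=> hk ni.
have HB : forall y : 'I_n.+1, y < n -> (k <= (lift i y).+1) = (k <= y.+1).
  move=> y yn; rewrite /= /bump.
  have -> : (i <= y) = false by lia.
  by [].
apply/idP/idP; first exact: L1.
move=> gs; apply: L2 => // a b c ab bc hi.
have qi : lift_perm i ord_max s i = ord_max by rewrite lift_perm_id.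
have qmax x : lift_perm i ord_max s x <= n.+1 by have := ltn_ord (lift_perm i ord_max s x).
rewrite /cond /ranked_last /ranked_first.
have := ltn_ord c.
case/orP: hi => [/orP[]|] /eqP E; rewrite E in ab bc * => /=.
- lia.
- move=> cn; have -> : k <= i.+1 by lia.
  by rewrite qi /= ltnNge qmax.
- by move=> _; case: ifP => _; rewrite qi /= [n.+1 < _]ltnNge qmax ?andbF.
Qed.

Lemma B_nec n k (q : {perm 'I_n.+2}) :
  n.+1 < k -> good (fun x => k <= x) q -> n <= q ord_max.
Proof.
move=> hk /goodP H; rewrite leqNgt; apply/negP => lt.
have main : forall a b : 'I_n.+2, a < b -> b != ord_max ->
    n <= q a -> n <= q b -> False.
  move=> a b ab bm qa qb.
  have bv : (b : nat) != n.+1 by apply: contra bm => /eqP e; apply/eqP/val_inj.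
  have bl : b < (ord_max : 'I_n.+2) by have := ltn_ord b; rewrite /=; lia.
  have := H a b ord_max ab bl; rewrite /cond.
  have -> : (k <= b.+1) = false by have := ltn_ord b; lia.
  by rewrite /ranked_first (leq_trans lt qa) (leq_trans lt qb).
set x := (q^-1)%g ord_max; set y := (q^-1)%g (inord n : 'I_n.+2).
have qx : q x = ord_max by rewrite permKV.
have qy : q y = inord n by rewrite permKV.
have xm : x != ord_max by apply/eqP => e; move: lt; rewrite -e qx /=; lia.
have ym : y != ord_max by apply/eqP => e; move: lt; rewrite -e qy /= inordK //; lia.
have nqx : n <= q x by rewrite qx.
have nqy : n <= q y by rewrite qy inordK.
case: (ltngtP x y) => [xy|yx|e].
- exact: (main x y).
- exact: (main y x).
- have : q x = q y by congr (q _); apply: val_inj.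
  by rewrite qx qy => /(congr1 val); rewrite /= inordK //; lia.
Qed.

Lemma B_good n k (j : 'I_n.+2) (s : {perm 'I_n.+1}) :
  n.+1 < k -> n <= j ->
  good (fun x => k <= x) (lift_perm ord_max j s) = good (fun x => k <= x) s.
Proof.
move=> hk nj.
have HB : forall y : 'I_n.+1, y < n -> (k <= (lift ord_max y).+1) = (k <= y.+1).
  move=> y yn; have := lift_val_le ord_max y; lia.
apply/idP/idP; first exact: L1.
move=> gs; apply: L2 => // a b c ab bc hi.
have := ltn_ord c.
case/orP: hi => [/orP[]|] /eqP E; rewrite E in ab bc * => /=.
- by move=> cn; move: ab bc => /= ab bc; lia.
- by move=> cn; move: ab bc => /= ab bc; lia.
- move=> _; rewrite /cond.
  have -> : (k <= b.+1) = false by move: bc => /= bc; lia.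
  rewrite /ranked_first lift_perm_id; apply/negP => /andP[h1 h2].
  have e : lift_perm ord_max j s a = lift_perm ord_max j s b.
    have h1' : j < lift_perm ord_max j s a := h1.
    have h2' : j < lift_perm ord_max j s b := h2.
    apply: ord_inj; have := ltn_ord (lift_perm ord_max j s a).
    have := ltn_ord (lift_perm ord_max j s b); lia.
  by move/perm_inj: e => e; move: ab; rewrite e ltnn.
Qed.

Definition G n k := #|[pred q : {perm 'I_n} | good (fun x => k <= x) q]|.

Lemma recA n k : k <= n.+1 -> G n.+2 k = 2 * G n.+1 k.
Proof.
move=> hk; rewrite /G -(cardID [pred q : {perm 'I_n.+2} | q ord_max == ord_max]).
rewrite (@eq_card _ _ [pred q : {perm 'I_n.+2} | (q ord_max == ord_max) && good (fun x => k <= x) q]); last first.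
  by move=> q; rewrite !inE andbC.
rewrite (@eq_card _ [predD _ & _] [pred q : {perm 'I_n.+2} | (q (inord n) == ord_max) && good (fun x => k <= x) q]); last first.
  move=> q; rewrite !inE; apply/andP/andP.
    case=> nq g; set i := (q^-1)%g ord_max.
    have qi : q i = ord_max by rewrite permKV.
    have ni := A_nec hk qi g.
    have im : i != ord_max by apply/eqP => e; rewrite e in qi; rewrite qi eqxx in nq.
    have -> : (inord n : 'I_n.+2) = i.
      apply: val_inj; rewrite /= inordK //.
      have iv : (i : nat) != n.+1 by apply/eqP => e; move: im; rewrite (_ : i = ord_max) ?eqxx //; apply: val_inj.
      have := ltn_ord i; lia.
    by rewrite qi eqxx.
  case=> /eqP qn g; split => //; apply/negP => /eqP e.
  have : q (inord n) = q ord_max by rewrite qn e.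
  by move/perm_inj/(congr1 val); rewrite /= inordK //; lia.
rewrite !card_lift_perm.
rewrite (@eq_card _ _ [pred s : {perm 'I_n.+1} | good (fun x => k <= x) s]); last first.
  by move=> s; rewrite !inE A_good.
rewrite (@eq_card _ [pred s | _] [pred s : {perm 'I_n.+1} | good (fun x => k <= x) s]); last first.
  by move=> s; rewrite !inE A_good // inordK.
by rewrite addnn mul2n.
Qed.

Lemma recB n k : n.+1 < k -> G n.+2 k = 2 * G n.+1 k.
Proof.
move=> hk; rewrite /G -(cardID [pred q : {perm 'I_n.+2} | q ord_max == ord_max]).
rewrite (@eq_card _ _ [pred q : {perm 'I_n.+2} | (q ord_max == ord_max) && good (fun x => k <= x) q]); last first.
  by move=> q; rewrite !inE andbC.
rewrite (@eq_card _ [predD _ & _] [pred q : {perm 'I_n.+2} | (q ord_max == inord n) && good (fun x => k <= x) q]); last first.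
  move=> q; rewrite !inE; apply/andP/andP.
    case=> nq g; have nj := B_nec hk g.
    have -> : (inord n : 'I_n.+2) = q ord_max.
      apply: val_inj; rewrite /= inordK //.
      have iv : (q ord_max : nat) != n.+1 by apply/eqP => e; move: nq; rewrite (_ : q ord_max = ord_max) ?eqxx //; apply: val_inj.
      have := ltn_ord (q ord_max); lia.
    by rewrite eqxx.
  case=> /eqP qn g; split => //; rewrite qn; apply/negP => /eqP/(congr1 val).
  by rewrite /= inordK //; lia.
rewrite !card_lift_perm.
rewrite (@eq_card _ _ [pred s : {perm 'I_n.+1} | good (fun x => k <= x) s]); last first.
  by move=> s; rewrite !inE B_good.
rewrite (@eq_card _ [pred s | _] [pred s : {perm 'I_n.+1} | good (fun x => k <= x) s]); last first.
  by move=> s; rewrite !inE B_good // inordK.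
by rewrite addnn mul2n.
Qed.

Lemma G1 k : G 1 k = 1.
Proof.
rewrite /G (@eq_card _ _ predT) ?card_Sn //.
move=> q; rewrite !inE; apply/goodP => a b c ab bc.
by move: (ltn_ord c); have := ltn_ord a; lia.
Qed.

Lemma Gval n k : G n.+1 k = 2 ^ n.
Proof.
elim: n => [|n IH]; first exact: G1.
case: (leqP k n.+1) => hk; [rewrite recA // | rewrite recB //]; by rewrite IH expnS.
Qed.

Theorem proposition8 (n k : nat) (h1 : 1 < k) (h2 : k < n) :
  f n (fun x => (k <= x) && (x <= n - 1)) = 2 ^ (n - 1).
Proof.
have -> : f n (fun x => (k <= x) && (x <= n - 1)) = G n k.
  rewrite /f /G; apply: eq_card => q; rewrite !inE.
  apply/goodP/goodP => H a b c ab bc; have := H a b c ab bc; rewrite /cond.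
    have hc := ltn_ord c; have -> : b.+1 <= n - 1 by lia. by rewrite andbT.
  have hc := ltn_ord c; have -> : b.+1 <= n - 1 by lia. by rewrite andbT.
case: n h2 => [|n] h2; first by [].
by rewrite Gval subn1.
Qed.
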